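(* Let $l,T\in\mathbb{N}$, let $\widehat{Q}:=(-\frac{1}{4},\ldots,-\frac{1}{4})+[-T,2T]^{l}\subseteq\mathbb{R}^l$, and let $\phi\colon\mathbb{Z}^{l}\to\mathbb{Z}^{l}$ be a permutation such that $\|\phi(x)-x\|\leq T$ for all $x\in\mathbb{Z}^{l}$. Then there exist permutations $\sigma_{1},\sigma_{2},\ldots,\sigma_{3^{l}}\colon \frac{1}{2}\mathbb{Z}^{l}\to\frac{1}{2}\mathbb{Z}^{l}$ such that (i) for each $k\in \{1,\dots,3^{l}\}$ there exists $p_{k}\in\{-1,0,1\}^{l}$ such that for every $z\in \mathbb{Z}^{l}$ the restriction of $\sigma_{k}$ to $\frac{1}{2}\mathbb{Z}^{l}\cap(\widehat{Q}+T(3z+p_{k}))$ is a permutation of $\frac{1}{2}\mathbb{Z}^{l}\cap (\widehat{Q}+T(3z+p_{k}))$; (ii) $\phi=(\sigma_{3^{l}}\circ \sigma_{3^{l}-1}\circ \cdots\circ \sigma_{1})|_{\mathbb{Z}^{l}}$.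
   Context: $\|\cdot\|$ is the Euclidean norm. *)

(* Defs.v *)
From HB Require Import structures.
From mathcomp Require Import all_boot all_order all_algebra.
Set Implicit Arguments. Unset Strict Implicit. Unset Printing Implicit Defensive.
Import Order.TTheory GRing.Theory Num.Theory.
Local Open Scope ring_scope.

(* Points of Z^l are row vectors 'rV[int]_l.
   Points of (1/2)Z^l are ENCODED by their doubles: y : 'rV[int]_l stands
   for the point y/2 in (1/2)Z^l.  [halfpt y] is that actual point in Q^l. *)
Definition halfpt (l : nat) (y : 'rV[int]_l) : 'rV[rat]_l :=
  \row_i ((y 0 i)%:~R / 2).

Definition emb (l : nat) (x : 'rV[int]_l) : 'rV[int]_l := x *+ 2.

(* ||v|| <= T for the Euclidean norm, written as ||v||^2 <= T^2 (T >= 0). *)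
Definition norm_le (l : nat) (v : 'rV[int]_l) (T : nat) : Prop :=
  \sum_(i < l) (v 0 i) ^+ 2 <= (T%:Z) ^+ 2.

Definition Qhat (l T : nat) (q : 'rV[rat]_l) : Prop :=
  forall i : 'I_l, - (T%:R) <= q 0 i + 1/4 <= 2 * T%:R.

Definition translate (l : nat) (A : 'rV[rat]_l -> Prop) (v : 'rV[rat]_l)
  (q : 'rV[rat]_l) : Prop := A (q - v).

Definition perm_of_set (U : Type) (S : U -> Prop) (f : U -> U) : Prop :=
  (forall y, S y -> S (f y)) /\
  (forall y y', S y -> S y' -> f y = f y' -> y = y') /\
  (forall y, S y -> exists2 y', S y' & f y' = y).

Fixpoint comp_upto (U : Type) (sigma : nat -> U -> U) (n : nat) : U -> U :=
  match n with
  | 0 => id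
  | n'.+1 => sigma n' \o comp_upto sigma n'
  end.

(* Main.v *)
Require Import Defs.
From HB Require Import structures.
From mathcomp Require Import all_boot all_order all_algebra.
From mathcomp Require Import zify ring lra.
From Stdlib Require Import ClassicalEpsilon.
Import Order.TTheory GRing.Theory Num.Theory.
Local Open Scope ring_scope.
Set Implicit Arguments. Unset Strict Implicit.

Definition swapR (U : Type) (R : U -> U -> Prop) (y : U) : U :=
  match excluded_middle_informative (exists y', R y y') with
  | left h => proj1_sig (constructive_indefinite_description _ h)
  | right _ =>
    match excluded_middle_informative (exists y0, R y0 y) with
    | left h => proj1_sig (constructive_indefinite_description _ h)
    | right _ => y
    end
  end.

Definition good (U : Type) (R : U -> U -> Prop) :=
  [/\ (forall y a b, R y a -> R y b -> a = b),
      (forall y a b, R a y -> R b y -> a = b) &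
      (forall y a b, R y a -> R b y -> False)].

Lemma swapR_fwd (U : Type) (R : U -> U -> Prop) y y' :
  good R -> R y y' -> swapR R y = y'.
Proof.
move=> [G1 G2 G3] Hy; rewrite /swapR; case: excluded_middle_informative => [h|h].
  by case: constructive_indefinite_description => /= a Ha; exact: G1 Ha Hy.
by exfalso; apply: h; exists y'.
Qed.

Lemma swapR_bwd (U : Type) (R : U -> U -> Prop) y y0 :
  good R -> R y0 y -> swapR R y = y0.
Proof.
move=> [G1 G2 G3] Hy; rewrite /swapR; case: excluded_middle_informative => [h|h].
  by exfalso; case: h => a Ha; exact: G3 Ha Hy.
case: excluded_middle_informative => [h'|h']; last by exfalso; apply: h'; exists y0.
by case: constructive_indefinite_description => /= a Ha; exact: G2 Ha Hy.
Qed.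

Lemma swapR_id (U : Type) (R : U -> U -> Prop) y :
  ~ (exists y', R y y') -> ~ (exists y0, R y0 y) -> swapR R y = y.
Proof.
move=> h1 h2; rewrite /swapR; case: excluded_middle_informative => [h|h]; first by [].
by case: excluded_middle_informative.
Qed.

Lemma swapR_inv (U : Type) (R : U -> U -> Prop) : good R -> involutive (swapR R).
Proof.
move=> G y.
case: (classic (exists y', R y y')) => [[y' Hy]|h1].
  by rewrite (swapR_fwd G Hy) (swapR_bwd G Hy).
case: (classic (exists y0, R y0 y)) => [[y0 Hy]|h2].
  by rewrite (swapR_bwd G Hy) (swapR_fwd G Hy).
by rewrite !swapR_id.
Qed.

Lemma swapR_pres (U : Type) (R : U -> U -> Prop) (S : U -> Prop) :
  good R -> (forall a b, R a b -> (S a <-> S b)) -> forall y, S y -> S (swapR R y).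
Proof.
move=> G HS y Sy.
case: (classic (exists y', R y y')) => [[y' Hy]|h1].
  by rewrite (swapR_fwd G Hy); apply/(HS _ _ Hy).
case: (classic (exists y0, R y0 y)) => [[y0 Hy]|h2].
  by rewrite (swapR_bwd G Hy); apply/(HS _ _ Hy).
by rewrite swapR_id.
Qed.

Lemma perm_of_set_inv (U : Type) (S : U -> Prop) (g : U -> U) :
  involutive g -> (forall y, S y -> S (g y)) -> perm_of_set S g.
Proof.
move=> gK HS; split; first exact: HS.
split; first by move=> y y' _ _ /(congr1 g); rewrite !gK.
by move=> y Sy; exists (g y); [exact: HS | exact: gK].
Qed.

Lemma perm_of_set_comp (U : Type) (S : U -> Prop) (f g : U -> U) :
  perm_of_set S f -> perm_of_set S g -> perm_of_set S (g \o f).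
Proof.
move=> [f1 [f2 f3]] [g1 [g2 g3]]; split; first by move=> y Sy /=; apply/g1/f1.
split.
  move=> y y' Sy Sy' /= E; apply: f2 => //; apply: g2 => //; exact: f1.
move=> y Sy; have [y1 S1 E1] := g3 y Sy; have [y2 S2 E2] := f3 y1 S1.
by exists y2 => //=; rewrite E2.
Qed.

Lemma coordE (T:nat) (y CT : int) :
 (- (T%:R) <= (y%:~R / 2 - CT%:~R + 1/4 : rat) <= 2 * T%:R) <-> (2*CT - 2*T%:Z <= y <= 2*CT + 4*T%:Z - 1).
Proof.
have key: forall a b : int, (a <= b) = (a%:~R <= b%:~R :> rat) by move=> a b; rewrite ler_int.
have castT: (T%:R : rat) = (T%:Z)%:~R by [].
split.
- move=>/andP[h1 h2].
  have: (-4*T%:Z <= 2*y - 4*CT + 1) by rewrite key !(intrD, intrM, intrN, intrB) /= -castT; lra.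
  have: (2*y - 4*CT + 1 <= 8 * T%:Z) by rewrite key !(intrD, intrM, intrN, intrB) /= -castT; lra.
  lia.
- move=> /andP[h1 h2].
  have := h1; rewrite key !(intrD, intrM, intrN, intrB) /= -castT => h1'.
  have := h2; rewrite key !(intrD, intrM, intrN, intrB) /= -castT => h2'.
  apply/andP; split; lra.
Qed.

Definition Box (l T : nat) (p z : 'rV[int]_l) (y : 'rV[int]_l) : Prop :=
  translate (@Qhat l T)
    (map_mx (fun a : int => a%:~R : rat) ((z *+ 3 + p) *+ T)) (halfpt y).
Lemma entryE (l T : nat) (p z : 'rV[int]_l) i :
  ((z *+ 3 + p) *+ T) 0 i = (z 0 i * 3 + p 0 i) * T%:Z.
Proof. rewrite (mulmxnE (z *+ 3 + p)) mxE (mulmxnE z) -(mulr_natr (_ + _) T) natz -(mulr_natr (z 0 i) 3). by []. Qed.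
Lemma BoxE (l T : nat) (p z y : 'rV[int]_l) :
  Box T p z y <-> forall i, 2 * ((z 0 i * 3 + p 0 i) * T%:Z) - 2*T%:Z <= y 0 i
                               <= 2 * ((z 0 i * 3 + p 0 i) * T%:Z) + 4*T%:Z - 1.
Proof.
rewrite /Box /translate /Qhat; split => h i; have := h i; rewrite !mxE entryE.
  by move/coordE.
by move/coordE.
Qed.

Definition e1 (l : nat) (i0 : 'I_l) : 'rV[int]_l := \row_j (if j == i0 then 1 else 0).
Definition park (l : nat) (i0 : 'I_l) (x : 'rV[int]_l) := emb x + e1 i0.

Lemma embE (l : nat) (x : 'rV[int]_l) j : (emb x) 0 j = x 0 j * 2.
Proof. by rewrite /emb (mulmxnE x) -(mulr_natr (x 0 j) 2). Qed.

Lemma parkE (l : nat) (i0 : 'I_l) (x : 'rV[int]_l) j :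
  (park i0 x) 0 j = x 0 j * 2 + (if j == i0 then 1 else 0).
Proof. by rewrite /park mxE embE mxE. Qed.

Lemma emb_inj (l : nat) (x x' : 'rV[int]_l) : emb x = emb x' -> x = x'.
Proof.
move/rowP => h; apply/rowP => j; have := h j; rewrite !embE; lia.
Qed.

Lemma park_inj (l : nat) (i0 : 'I_l) (x x' : 'rV[int]_l) : park i0 x = park i0 x' -> x = x'.
Proof.
move/rowP => h; apply/rowP => j; have := h j; rewrite !parkE; case: (j == i0); lia.
Qed.

Lemma emb_park (l : nat) (i0 : 'I_l) (x x' : 'rV[int]_l) : emb x <> park i0 x'.
Proof.
move/rowP => h; have := h i0; rewrite embE parkE eqxx; lia.
Qed.

Definition hc (l T : nat) (y : 'rV[int]_l) : 'rV[int]_l :=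
  \row_i divz (y 0 i) (2 * T%:Z).

Lemma hcP (l T : nat) (y : 'rV[int]_l) i : (0 < T)%N ->
  2 * T%:Z * (hc T y 0 i) <= y 0 i < 2 * T%:Z * (hc T y 0 i + 1).
Proof.
move=> hT; rewrite mxE.
have d0 : (2 * T%:Z) != 0 by lia.
have d1 : 0 < (2 * T%:Z) by lia.
have := lez_floor (y 0 i) d0; have := ltz_ceil (y 0 i) d1.
move: divz (y 0 i) (2 * T%:Z) => q; nia.
Qed.

Definition cell (l T : nat) (x : 'rV[int]_l) := hc T (emb x).

Lemma cellP (l T : nat) (i0 : 'I_l) (x : 'rV[int]_l) i : (0 < T)%N ->
  (2 * T%:Z * (cell T x 0 i) <= x 0 i * 2 < 2 * T%:Z * (cell T x 0 i + 1)) /\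
  (2 * T%:Z * (cell T x 0 i) <= park i0 x 0 i < 2 * T%:Z * (cell T x 0 i + 1)).
Proof.
move=> hT; have := hcP (emb x) i hT; rewrite -/(cell T x) embE parkE.
move: (cell T x 0 i) => a; case: (i == i0) => h; split; nia.
Qed.

Lemma BoxC (l T : nat) (p z y a : 'rV[int]_l) : (0 < T)%N ->
  (forall i, 2 * T%:Z * a 0 i <= y 0 i < 2 * T%:Z * (a 0 i + 1)) ->
  (Box T p z y <-> forall i, z 0 i * 3 + p 0 i - 1 <= a 0 i <= z 0 i * 3 + p 0 i + 1).
Proof.
move=> hT H; rewrite BoxE; split => h i; have := h i; have := H i;
  move: (z 0 i * 3 + p 0 i) (a 0 i) (y 0 i) => c b v; nia.
Qed.

Lemma disp (l T : nat) (v : 'rV[int]_l) i : norm_le v T -> - T%:Z <= v 0 i <= T%:Z.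
Proof.
rewrite /norm_le => h.
have : v 0 i ^+ 2 <= \sum_(j < l) v 0 j ^+ 2.
  rewrite (bigD1 i) //= lerDl; apply: sumr_ge0 => j _; exact: sqr_ge0.
move=> h2; have := le_trans h2 h; rewrite !expr2; nia.
Qed.

Definition cls (l : nat) (c : 'rV[int]_l) : {ffun 'I_l -> 'I_3} :=
  [ffun i => inord (absz (modz (c 0 i) 3))].
Definition idx (l : nat) (c : 'rV[int]_l) : nat :=
  index (cls c) (enum {ffun 'I_l -> 'I_3}).
Definition rep (o : 'I_3) : int :=
  if nat_of_ord o == 0%N then 0 else if nat_of_ord o == 1%N then 1 else -1.
Definition pk (l : nat) (k : nat) : 'rV[int]_l :=
  \row_i rep (nth [ffun => ord0] (enum {ffun 'I_l -> 'I_3}) k i).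

Lemma idx_lt (l : nat) (c : 'rV[int]_l) : (idx c < 3 ^ l)%N.
Proof.
have -> : (3 ^ l = #|{ffun 'I_l -> 'I_3}|)%N by rewrite card_ffun !card_ord.
by rewrite /idx cardT index_mem mem_enum.
Qed.

Lemma pk_in (l k : nat) i : (pk l k) 0 i \in [:: -1; 0; 1].
Proof. by rewrite mxE /rep; case: ifP => _; last case: ifP. Qed.

Lemma pk_cls (l : nat) (c : 'rV[int]_l) i : exists w, c 0 i = w * 3 + pk l (idx c) 0 i.
Proof.
rewrite mxE /idx nth_index ?mem_enum // ffunE /rep.
have E := divz_eq (c 0 i) 3.
have h0 := modz_ge0 (c 0 i) (isT : (3:int) != 0).
have h1 := ltz_pmod (c 0 i) (isT : (0:int) < 3).
move: (divz (c 0 i) 3) (modz (c 0 i) 3) E h0 h1 => q m E h0 h1.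
have : m = 0 \/ m = 1 \/ m = 2 by lia.
case=> Hm; [|case: Hm => Hm]; rewrite Hm inordK //=; [exists q|exists q|exists (q+1)]; lia.
Qed.



Definition proc (l T : nat) (k : nat) (x : 'rV[int]_l) : bool := (idx (cell T x) < k)%N.

Definition pos (l T : nat) (phi : 'rV[int]_l -> 'rV[int]_l) (i0 : 'I_l) k x :=
  if proc T k (phi x) then emb (phi x) else if proc T k x then park i0 x else emb x.

Definition qq (l T : nat) (i0 : 'I_l) k x :=
  if proc T k.+1 x then park i0 x else emb x.

Definition pos1 (l T : nat) (phi : 'rV[int]_l -> 'rV[int]_l) (i0 : 'I_l) k x :=
  if proc T k (phi x) then emb (phi x) else qq T i0 k x.

Definition R1 (l T : nat) (i0 : 'I_l) k (y y' : 'rV[int]_l) :=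
  exists x, [/\ y = emb x, y' = park i0 x & idx (cell T x) = k].

Definition R2 (l T : nat) (phi : 'rV[int]_l -> 'rV[int]_l) (i0 : 'I_l) k (y y' : 'rV[int]_l) :=
  exists x, [/\ y = qq T i0 k x, y' = emb (phi x) & idx (cell T (phi x)) = k].

Ltac ep E := first [exact: (emb_park E) | exact: (emb_park (esym E))].

Lemma qq_inj (l T : nat) (i0 : 'I_l) k x x' : qq T i0 k x = qq T i0 k x' -> x = x'.
Proof.
rewrite /qq; case: ifP => _; case: ifP => _.
- exact: park_inj.
- by move=> E; exfalso; apply: (@emb_park _ i0 x' x).
- by move=> E; exfalso; apply: (@emb_park _ i0 x x').
- exact: emb_inj.
Qed.

Lemma good1 (l T : nat) (i0 : 'I_l) k : good (R1 T i0 k).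
Proof.
split.
- by move=> y a b [x [-> -> _]] [x' [/emb_inj <- -> _]].
- by move=> y a b [x [-> -> _]] [x' [-> /park_inj <- _]].
- by move=> y a b [x [-> _ _]] [x' [_ E _]]; ep E.
Qed.

Lemma good2 (l T : nat) (phi : 'rV[int]_l -> 'rV[int]_l) (i0 : 'I_l) k :
  injective phi -> good (R2 T phi i0 k).
Proof.
move=> phiI; split.
- by move=> y a b [x [-> -> _]] [x' [/qq_inj <- -> _]].
- by move=> y a b [x [-> -> _]] [x' [-> /emb_inj/phiI <- _]].
- move=> y a b [x [-> _ Hk]] [x' [_ E Hk']].
  move: E; rewrite /qq /proc; case: ifP => h.
    by move=> E; ep E.
  by move/emb_inj => Ex; move: h; rewrite Ex Hk'; rewrite ltnSn.
Qed.

Lemma step1 (l T : nat) (phi : 'rV[int]_l -> 'rV[int]_l) (i0 : 'I_l) k x :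
  swapR (R1 T i0 k) (pos T phi i0 k x) = pos1 T phi i0 k x.
Proof.
rewrite /pos /pos1 /qq /proc; case: ifP => h1.
  apply: swapR_id.
    by case=> y' [x' [/emb_inj Ex _ Hk]]; move: h1; rewrite Ex Hk ltnn.
  by case=> y0 [x' [_ E _]]; ep E.
case: ifP => h2.
  rewrite ifT; last by apply: (ltn_trans h2).
  apply: swapR_id.
    by case=> y' [x' [E _ _]]; ep E.
  by case=> y0 [x' [_ /park_inj Ex Hk]]; move: h2; rewrite Ex Hk ltnn.
case: (boolP (idx (cell T x) == k)) => hk.
  rewrite ifT; last by rewrite (eqP hk).
  by apply: swapR_fwd; [exact: good1 | exists x; split => //; apply/eqP].
rewrite ifF; last by rewrite ltnS leq_eqVlt (negbTE hk) h2.
apply: swapR_id.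
  by case=> y' [x' [/emb_inj Ex _ Hk]]; move: hk; rewrite Ex Hk eqxx.
by case=> y0 [x' [_ E _]]; ep E.
Qed.

Lemma step2 (l T : nat) (phi : 'rV[int]_l -> 'rV[int]_l) (i0 : 'I_l) k x :
  injective phi ->
  swapR (R2 T phi i0 k) (pos1 T phi i0 k x) = pos T phi i0 k.+1 x.
Proof.
move=> phiI.
rewrite /pos /pos1 /proc; case: ifP => h1.
  rewrite ifT; last by apply: (ltn_trans h1).
  apply: swapR_id.
    case=> y' [x' [E _ Hk]]; move: E; rewrite /qq /proc; case: ifP => h.
      by move=> E; ep E.
    by move/emb_inj => Ex; move: h; rewrite -Ex ltnS ltnW.
  by case=> y0 [x' [_ /emb_inj/phiI Ex Hk]]; move: h1; rewrite Ex Hk ltnn.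
case: (boolP (idx (cell T (phi x)) == k)) => hk.
  rewrite ifT; last by rewrite (eqP hk).
  by apply: swapR_fwd; [exact: good2 | exists x; split => //; apply/eqP].
rewrite ifF; last by rewrite ltnS leq_eqVlt (negbTE hk) h1.
apply: swapR_id.
  by case=> y' [x' [/qq_inj Ex _ Hk]]; move: hk; rewrite Ex Hk eqxx.
case=> y0 [x' [_ E Hk]]; move: E; rewrite /qq /proc; case: ifP => h.
  by move=> E; ep E.
by move/emb_inj => Ex; move: h; rewrite Ex Hk ltnSn.
Qed.


Lemma pres1 (l T : nat) (i0 : 'I_l) k p z a b :
  R1 T i0 k a b -> (Box T p z a <-> Box T p z b).
Proof.
case=> x [-> -> _]; rewrite !BoxE; split => h i; have := h i;
  rewrite embE parkE; case: (i == i0); move: ((z 0 i * 3 + p 0 i) * T%:Z) => A; lia.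
Qed.

Lemma celldisp (l T : nat) (i0 : 'I_l) (phi : 'rV[int]_l -> 'rV[int]_l) x i :
  (0 < T)%N -> norm_le (phi x - x) T ->
  -1 <= cell T (phi x) 0 i - cell T x 0 i <= 1.
Proof.
move=> hT Hn; have := disp i Hn; rewrite !mxE.
have [h1 _] := cellP i0 x i hT; have [h2 _] := cellP i0 (phi x) i hT.
move: h1 h2 (cell T (phi x) 0 i) (cell T x 0 i) (phi x 0 i) (x 0 i) => + + b a u v.
move: (cell T (phi x) 0 i) (cell T x 0 i) => b' a'.
nia.
Qed.

Lemma pres2 (l T : nat) (phi : 'rV[int]_l -> 'rV[int]_l) (i0 : 'I_l) k z a b :
  (0 < T)%N -> (forall x, norm_le (phi x - x) T) ->
  R2 T phi i0 k a b -> (Box T (pk l k) z a <-> Box T (pk l k) z b).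
Proof.
move=> hT Hn [x [-> -> Hk]].
rewrite (@BoxC _ _ _ _ _ (cell T x)) //; last first.
  by move=> i; have [h1 h2] := cellP i0 x i hT; rewrite /qq; case: ifP => _ //; rewrite embE.
rewrite (@BoxC _ _ _ _ _ (cell T (phi x))) //; last first.
  by move=> i; have [h1 h2] := cellP i0 (phi x) i hT; rewrite embE.
split => h i; have := h i; have [w Hw] := pk_cls (cell T (phi x)) i; rewrite Hk in Hw;
  have := celldisp i0 i hT (Hn x); lia.
Qed.

Lemma comp_id (l : nat) n (y : 'rV[int]_l) : comp_upto (fun _ => id) n y = y.
Proof. by elim: n => //= n ->. Qed.

Theorem lemma5p2_aux (l T : nat) (phi : 'rV[int]_l -> 'rV[int]_l) :
  bijective phi ->
  (forall x, norm_le (phi x - x) T) ->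
  exists sigma : nat -> 'rV[int]_l -> 'rV[int]_l,
    (forall k, (k < 3 ^ l)%N -> bijective (sigma k)) /\
    (forall k, (k < 3 ^ l)%N ->
       exists p : 'rV[int]_l,
         (forall i, p 0 i \in [:: -1; 0; 1]) /\
         forall z : 'rV[int]_l,
           perm_of_set
             (fun y : 'rV[int]_l => translate (@Qhat l T)
                 (map_mx (fun a : int => a%:~R : rat) ((z *+ 3 + p) *+ T)) (halfpt y))
             (sigma k)) /\
    (forall x, comp_upto sigma (3 ^ l) (emb x) = emb (phi x)).
Proof.
move=> [psi phiK psiK] Hn.
have phiI : injective phi := can_inj phiK.
have deg : (forall x, phi x = x) -> exists sigma : nat -> 'rV[int]_l -> 'rV[int]_l,
    (forall k, (k < 3 ^ l)%N -> bijective (sigma k)) /\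
    (forall k, (k < 3 ^ l)%N ->
       exists p : 'rV[int]_l,
         (forall i, p 0 i \in [:: -1; 0; 1]) /\
         forall z : 'rV[int]_l,
           perm_of_set
             (fun y : 'rV[int]_l => translate (@Qhat l T)
                 (map_mx (fun a : int => a%:~R : rat) ((z *+ 3 + p) *+ T)) (halfpt y))
             (sigma k)) /\
    (forall x, comp_upto sigma (3 ^ l) (emb x) = emb (phi x)).
  move=> idp; exists (fun _ => id); split; [|split].
  - by move=> k _; exists id.
  - move=> k _; exists 0; split; first by move=> i; rewrite mxE.
    by move=> z; apply: perm_of_set_inv.
  - by move=> x; rewrite comp_id idp.
case: (posnP T) => [T0|hT].
  apply: deg => x; apply/rowP => i; have := disp i (Hn x); rewrite T0 !mxE; rewrite oppr0 => /andP[a b]; apply/subr0_eq/eqP; by rewrite eq_le b a.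
case: (posnP l) => [l0|lpos].
  by apply: deg => x; apply/rowP => -[m hm]; exfalso; move: hm; rewrite l0.
pose i0 : 'I_l := Ordinal lpos.
exists (fun k => swapR (R2 T phi i0 k) \o swapR (R1 T i0 k)); split; [|split].
- move=> k _; apply: bij_comp; apply: inv_bij; apply: swapR_inv; [exact: good2|exact: good1].
- move=> k _; exists (pk l k); split; first exact: pk_in.
  move=> z; apply: perm_of_set_comp; apply: perm_of_set_inv.
  + apply: swapR_inv; exact: good1.
  + apply: swapR_pres; first exact: good1.
    move=> a b; exact: pres1.
  + apply: swapR_inv; exact: good2.
  + apply: swapR_pres; first exact: good2.
    move=> a b; exact: pres2.
- move=> x.
  have H : forall n, comp_upto (fun k => swapR (R2 T phi i0 k) \o swapR (R1 T i0 k)) n (emb x)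
                     = pos T phi i0 n x.
    elim=> [|n IH] /=; first by rewrite /pos /proc !ltn0.
    by rewrite IH step1 step2.
  by rewrite H /pos /proc idx_lt.
Qed.

Unset Implicit Arguments.

Theorem lemma5p2 (l T : nat) (phi : 'rV[int]_l -> 'rV[int]_l) :
  bijective phi ->
  (forall x, norm_le (phi x - x) T) ->
  exists sigma : nat -> 'rV[int]_l -> 'rV[int]_l,
    (forall k, (k < 3 ^ l)%N -> bijective (sigma k)) /\
    (forall k, (k < 3 ^ l)%N ->
       exists p : 'rV[int]_l,
         (forall i, p 0 i \in [:: -1; 0; 1]) /\
         forall z : 'rV[int]_l,
           perm_of_set
             (fun y : 'rV[int]_l => translate (@Qhat l T)
                 (map_mx (fun a : int => a%:~R : rat) ((z *+ 3 + p) *+ T)) (halfpt y))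
             (sigma k)) /\
    (forall x, comp_upto sigma (3 ^ l) (emb x) = emb (phi x)).
Proof. exact: lemma5p2_aux. Qed.
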